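(* Let $\mathrm{dot}(\mathbf{x},\mathbf{y})=\langle\mathbf{x},\mathbf{y}\rangle$ for $\mathbf{x},\mathbf{y}\in\mathbb{R}^n$, with graph $\{(\mathbf{x},\mathbf{y},\langle\mathbf{x},\mathbf{y}\rangle)\}\subseteq\mathbb{R}^n\times\mathbb{R}^n\times\mathbb{R}$. Let $(\mathbf{x}_0,\mathbf{y}_0,z_0)\in\mathbb{R}^n\times\mathbb{R}^n\times\mathbb{R}$ with $\mathbf{x}_0\ne\mathbf{y}_0$ and $\mathbf{x}_0\ne-\mathbf{y}_0$, and put $p=\langle\mathbf{x}_0,\mathbf{y}_0\rangle$, $q=\|\mathbf{x}_0\|^2+\|\mathbf{y}_0\|^2$. Then the function $f(\lambda)=\frac{(1+\lambda^2)p+\lambda q}{(1-\lambda^2)^2}-z_0+\lambda$ has a unique root $\lambda$ in $(-1,1)$, the Euclidean projection of $(\mathbf{x}_0,\mathbf{y}_0,z_0)$ onto the graph of $\mathrm{dot}$ is unique, and it equals $(\mathbf{x}(\lambda),\mathbf{y}(\lambda),z_0-\lambda)$ where $\mathbf{x}(\lambda)=\frac{\mathbf{x}_0+\lambda\mathbf{y}_0}{1-\lambda^2}$ and $\mathbf{y}(\lambda)=\frac{\mathbf{y}_0+\lambda\mathbf{x}_0}{1-\lambda^2}$. *)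

(* Defs.v *)
From HB Require Import structures.
From mathcomp Require Import all_boot all_order all_algebra.
From mathcomp Require Import reals.
Set Implicit Arguments. Unset Strict Implicit. Unset Printing Implicit Defensive.
Import Order.TTheory GRing.Theory Num.Theory.
Local Open Scope ring_scope.

Definition dot (R : realType) (n : nat) (x y : 'rV[R]_n) : R :=
  \sum_(i < n) x 0 i * y 0 i.

Definition sqnorm (R : realType) (n : nat) (x : 'rV[R]_n) : R := dot x x.

Definition sqdist3 (R : realType) (n : nat) (x y : 'rV[R]_n) (z : R)
  (x0 y0 : 'rV[R]_n) (z0 : R) : R :=
  sqnorm (x - x0) + sqnorm (y - y0) + (z - z0) ^+ 2.

Definition in_dot_graph (R : realType) (n : nat) (x y : 'rV[R]_n) (z : R) : Prop :=
  z = dot x y.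

Definition is_proj_dot_graph (R : realType) (n : nat) (x0 y0 : 'rV[R]_n) (z0 : R)
  (x y : 'rV[R]_n) (z : R) : Prop :=
  in_dot_graph x y z /\
  forall (x' y' : 'rV[R]_n) (z' : R), in_dot_graph x' y' z' ->
    sqdist3 x y z x0 y0 z0 <= sqdist3 x' y' z' x0 y0 z0.

Definition f_root (R : realType) (n : nat) (x0 y0 : 'rV[R]_n) (z0 l : R) : R :=
  ((1 + l ^+ 2) * dot x0 y0 + l * (sqnorm x0 + sqnorm y0)) / (1 - l ^+ 2) ^+ 2
  - z0 + l.

Definition x_of (R : realType) (n : nat) (x0 y0 : 'rV[R]_n) (l : R) : 'rV[R]_n :=
  (1 - l ^+ 2)^-1 *: (x0 + l *: y0).

Definition y_of (R : realType) (n : nat) (x0 y0 : 'rV[R]_n) (l : R) : 'rV[R]_n :=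
  (1 - l ^+ 2)^-1 *: (y0 + l *: x0).

(* Main.v *)
Require Import Defs.
From HB Require Import structures.
From mathcomp Require Import all_boot all_order all_algebra.
From mathcomp Require Import reals.
From mathcomp Require Import ring lra.
From mathcomp Require Import polyrcf.
Import Order.TTheory GRing.Theory Num.Theory.
Local Open Scope ring_scope.
Set Implicit Arguments. Unset Strict Implicit.

Section Aux.
Variables (R : realType) (n : nat).
Implicit Types (x y z : 'rV[R]_n).

Lemma dotC x y : dot x y = dot y x.
Proof. by rewrite /dot; apply: eq_bigr => i _; rewrite mulrC. Qed.

Lemma dotDl x y z : dot (x + y) z = dot x z + dot y z.
Proof. by rewrite /dot -big_split; apply: eq_bigr => i _; rewrite mxE mulrDl. Qed.

Lemma dotDr x y z : dot z (x + y) = dot z x + dot z y.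
Proof. by rewrite !(dotC z) dotDl. Qed.

Lemma dotZl a x y : dot (a *: x) y = a * dot x y.
Proof. by rewrite /dot mulr_sumr; apply: eq_bigr => i _; rewrite mxE mulrA. Qed.

Lemma dotZr a x y : dot y (a *: x) = a * dot y x.
Proof. by rewrite !(dotC y) dotZl. Qed.

Lemma dotNl x y : dot (- x) y = - dot x y.
Proof. by rewrite /dot -sumrN; apply: eq_bigr => i _; rewrite mxE mulNr. Qed.

Lemma dotNr x y : dot y (- x) = - dot y x.
Proof. by rewrite !(dotC y) dotNl. Qed.

Lemma sqnorm_ge0 x : 0 <= sqnorm x.
Proof. by rewrite /sqnorm /dot; apply: sumr_ge0 => i _; rewrite -expr2 sqr_ge0. Qed.

Lemma sqnorm_eq0 x : sqnorm x = 0 -> x = 0.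
Proof.
rewrite /sqnorm /dot => /psumr_eq0P H.
apply/rowP => i; rewrite mxE.
have /eqP := H (fun j _ => ltac:(rewrite -expr2; exact: sqr_ge0)) i isT.
by rewrite mulf_eq0 orbb => /eqP.
Qed.

Lemma sqnorm_gt0 x : x != 0 -> 0 < sqnorm x.
Proof.
move=> hx; rewrite lt_neqAle sqnorm_ge0 andbT eq_sym.
by apply/eqP => /sqnorm_eq0 h; move: hx; rewrite h eqxx.
Qed.

Lemma key (X Y x0 y0 dx dy : 'rV[R]_n) (l z0 : R) :
  X - x0 = l *: Y -> Y - y0 = l *: X -> dot X Y = z0 - l ->
  sqdist3 (X + dx) (Y + dy) (dot (X + dx) (Y + dy)) x0 y0 z0 =
  sqdist3 X Y (z0 - l) x0 y0 z0 + (dot dx Y + dot X dy + dot dx dy) ^+ 2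
  + (sqnorm (dx - l *: dy) + (1 - l ^+ 2) * sqnorm dy).
Proof.
move=> hX hY hXY.
have e1 : X + dx - x0 = l *: Y + dx by rewrite addrAC hX.
have e2 : Y + dy - y0 = l *: X + dy by rewrite addrAC hY.
have e3 : X - x0 = l *: Y by [].
have e4 : Y - y0 = l *: X by [].
rewrite /sqdist3 /sqnorm e1 e2 e3 e4.
rewrite !(dotDl, dotDr, dotZl, dotZr, dotNl, dotNr).
rewrite ?(dotC Y dx) ?(dotC dy X) ?(dotC dy dx) hXY.
ring.
Qed.

End Aux.

Section Main.
Variables (R : realType) (n : nat) (x0 y0 : 'rV[R]_n) (z0 : R).

Lemma dpos (l : R) : -1 < l < 1 -> 0 < 1 - l ^+ 2.
Proof. move=> /andP[h1 h2]; nra. Qed.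

Lemma proj_char (l : R) : -1 < l < 1 -> f_root x0 y0 z0 l = 0 ->
  forall (x y : 'rV[R]_n) (z : R),
    is_proj_dot_graph x0 y0 z0 x y z <->
    (x = x_of x0 y0 l /\ y = y_of x0 y0 l /\ z = z0 - l).
Proof.
move=> hl hf.
have hd := dpos hl.
have hd0 : 1 - l ^+ 2 != 0 by rewrite gt_eqF.
set X := x_of x0 y0 l; set Y := y_of x0 y0 l.
have hX : X - x0 = l *: Y.
  by apply/rowP => i; rewrite /X /Y /x_of /y_of !mxE; field.
have hY : Y - y0 = l *: X.
  by apply/rowP => i; rewrite /X /Y /x_of /y_of !mxE; field.
have hXY : dot X Y = z0 - l.
  rewrite /X /Y /x_of /y_of !(dotDl, dotDr, dotZl, dotZr) (dotC y0 x0).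
  move: hf; rewrite /f_root /sqnorm => hf.
  set N := (1 + l ^+ 2) * dot x0 y0 + l * (dot x0 x0 + dot y0 y0).
  have hN : N / (1 - l ^+ 2) ^+ 2 = z0 - l by rewrite /N; lra.
  rewrite -hN /N; field; exact: hd0.
have pos : forall dx dy : 'rV[R]_n,
    0 <= sqnorm (dx - l *: dy) + (1 - l ^+ 2) * sqnorm dy.
  move=> dx dy; apply: addr_ge0; first exact: sqnorm_ge0.
  by apply: mulr_ge0; [exact: ltW | exact: sqnorm_ge0].
move=> x y z; split.
- case=> hz hmin.
  have := hmin X Y (z0 - l) (esym hXY).
  rewrite /in_dot_graph in hz; rewrite hz.
  have -> : x = X + (x - X) by rewrite addrC subrK.
  have -> : y = Y + (y - Y) by rewrite addrC subrK.
  rewrite (key (x - X) (y - Y) hX hY hXY).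
  set dx := x - X; set dy := y - Y.
  set s := _ ^+ 2.
  have hs : 0 <= s by rewrite /s sqr_ge0.
  have := pos dx dy; set E := sqnorm _ + _ => hE hle.
  have E0 : E = 0 by lra.
  have hdy : sqnorm dy = 0.
    have h1 := sqnorm_ge0 (dx - l *: dy); have h2 := sqnorm_ge0 dy.
    move: E0; rewrite /E => E0.
    have : (1 - l ^+ 2) * sqnorm dy = 0 by nra.
    by move/eqP; rewrite mulf_eq0 (negbTE hd0) /= => /eqP.
  have dy0 := sqnorm_eq0 hdy.
  have hdx : sqnorm (dx - l *: dy) = 0.
    move: E0; rewrite /E hdy mulr0 addr0 => //.
  have := sqnorm_eq0 hdx; rewrite dy0 scaler0 subr0 => dx0.
  rewrite dx0 !addr0; split; [by []|split; [by []|]].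
  by rewrite hXY.
- case=> [-> [-> ->]]; split; first by rewrite /in_dot_graph hXY.
  move=> x' y' z'; rewrite /in_dot_graph => ->.
  have -> : x' = X + (x' - X) by rewrite addrC subrK.
  have -> : y' = Y + (y' - Y) by rewrite addrC subrK.
  rewrite (key (x' - X) (y' - Y) hX hY hXY).
  have := pos (x' - X) (y' - Y).
  have hs := sqr_ge0 (dot (x' - X) Y + dot X (y' - Y) + dot (x' - X) (y' - Y)).
  move=> hE; lra.
Qed.

End Main.

Lemma polyP (R : realType) (p q z0 : R) : {P : {poly R} | forall l,
  P.[l] = (1 + l ^+ 2) * p + l * q + (l - z0) * (1 - l ^+ 2) ^+ 2}.
Proof.
exists ((1 + 'X^2) * p%:P + 'X * q%:P + ('X - z0%:P) * (1 - 'X^2) * (1 - 'X^2)).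
by move=> l; rewrite !hornerE.
Qed.

Theorem mainTheorem6 (R : realType) (n : nat) (x0 y0 : 'rV[R]_n) (z0 : R)
  (hxy : x0 != y0) (hxny : x0 != - y0) :
  (exists! l : R, -1 < l < 1 /\ f_root x0 y0 z0 l = 0) /\
  (forall l : R, -1 < l < 1 -> f_root x0 y0 z0 l = 0 ->
     forall (x y : 'rV[R]_n) (z : R),
       is_proj_dot_graph x0 y0 z0 x y z <->
       (x = x_of x0 y0 l /\ y = y_of x0 y0 l /\ z = z0 - l)).
Proof.
split; last exact: proj_char.
have hpq1 : 0 < sqnorm (x0 - y0) by apply: sqnorm_gt0; rewrite subr_eq0.
have hpq2 : 0 < sqnorm (x0 + y0).
  by apply: sqnorm_gt0; rewrite -[y0]opprK subr_eq0.
set p := dot x0 y0; set q := sqnorm x0 + sqnorm y0.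
have e1 : sqnorm (x0 - y0) = q - 2 * p.
  by rewrite /q /p /sqnorm !(dotDl, dotDr, dotNl, dotNr) (dotC y0 x0); ring.
have e2 : sqnorm (x0 + y0) = q + 2 * p.
  by rewrite /q /p /sqnorm !(dotDl, dotDr) (dotC y0 x0); ring.
have [P hP] := polyP p q z0.
have Pm1 : P.[-1] = 2 * p - q by rewrite hP; ring.
have P1 : P.[1] = 2 * p + q by rewrite hP; ring.
have [l] : {x | x \in `]-1, 1[ & root P x}.
  apply: poly_ivtoo; first by lra.
  rewrite Pm1 P1; rewrite e1 in hpq1; rewrite e2 in hpq2; nra.
rewrite in_itv /= => hl /rootP hr.
have ex : f_root x0 y0 z0 l = 0.
  have hd0 : 1 - l ^+ 2 != 0 by rewrite gt_eqF // dpos.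
  have : f_root x0 y0 z0 l * (1 - l ^+ 2) ^+ 2 = P.[l].
    by rewrite /f_root hP -/p -/q; field.
  rewrite hr => /eqP; rewrite mulf_eq0 expf_eq0 (negbTE hd0) andbF orbF.
  by move/eqP.
exists l; split; first by split.
move=> l' [hl' hf'].
have h1 := proj2 (proj_char hl ex (x_of x0 y0 l) (y_of x0 y0 l) (z0 - l))
   (conj erefl (conj erefl erefl)).
have [_ [_ h2]] := proj1 (proj_char hl' hf' _ _ _) h1.
by apply: oppr_inj; apply: (addrI z0); rewrite h2.
Qed.
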